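(* Let $\mathcal{X}$ be a finite set, $a:2^{\mathcal{X}}\to\mathbb{R}$ a monotone set function, $n\ge1$ and $l\ge1$ integers, and $\{\pi_\theta\}_{\theta\in\Theta}$ an expressive set-conditioned policy family. If $\theta^*\in\Theta$ is a greedy policy, i.e. $\mathcal{J}(\theta^*,\theta^* )\ge\mathcal{J}(\theta,\theta^* )$ for all $\theta\in\Theta$, then the set produced by $\mathrm{GS}(a,\pi_{\theta^*},n,l)$ is an exact greedy solution with probability $1$.
   Context: Marginal gain: $\Delta_a(x\mid B):=a(B\cup\{x\})-a(B)$. $a$ is monotone if $\Delta_a(x\mid B)\ge0$ for all $B\subseteq\mathcal X$, $x\in\mathcal X\setminus B$. A set-conditioned policy family assigns to each $\theta\in\Theta$ and each subset $B\subseteq\mathcal X$ a probability distribution $\pi_\theta(\cdot\mid B)$ on $\mathcal X$; it is expressive if for every assignment $B\mapsto p_B$ of probability distributions on $\mathcal X$ to subsets there is $\theta\in\Theta$ with $\pi_\theta(\cdot\mid B)=p_B$ for all $B$. Greedy sampling $\mathrm{GS}(a,\pi_\theta,k,l)$ is the random $k$-step procedure: $B_0=\emptyset$; for $i=0,\dots,k-1$, draw $l$ i.i.d. candidates $x_{i,0},\dots,x_{i,l-1}\sim\pi_\theta(\cdot\mid B_i)$, let $x_i$ be a candidate maximizing $\Delta_a(x_{i,j}\mid B_i)$ over $j$ (ties broken uniformly at random), and set $B_{i+1}=B_i\cup\{x_i\}$; output $B_k$. Expected gain: $\mathcal J(\theta,\theta'):=\frac1n\sum_{k=0}^{n-1}\mathbb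 E_{B\sim\mathrm{GS}(a,\pi_{\theta'},k,1)}\big[\mathbb E_{x\sim\pi_\theta(\cdot\mid B)}[\Delta_a(x\mid B)]\big]$. A set $B_n\subseteq\mathcal X$ is an exact greedy solution if there exist $x_0,\dots,x_{n-1}\in\mathcal X$ with $B_n=\{x_0,\dots,x_{n-1}\}$ and $x_t\in\arg\max_{x'\in\mathcal X}\Delta_a(x'\mid\{x_0,\dots,x_{t-1}\})$ for every $0\le t\le n-1$ (with $\{x_0,\dots,x_{-1}\}=\emptyset$). *)

(* Defs.v *)
From HB Require Import structures.
From mathcomp Require Import all_boot all_order all_algebra.
Set Implicit Arguments. Unset Strict Implicit. Unset Printing Implicit Defensive.
Import Order.TTheory GRing.Theory Num.Theory.
Local Open Scope ring_scope.

Section GreedySampling.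
Variables (R : realFieldType) (X : finType).

Definition is_dist (p : X -> R) : Prop :=
  (forall x, 0 <= p x) /\ \sum_(x : X) p x = 1.

Definition gain (a : {set X} -> R) (x : X) (B : {set X}) : R :=
  a (x |: B) - a B.

Definition monotone (a : {set X} -> R) : Prop :=
  forall (B : {set X}) (x : X), x \notin B -> 0 <= gain a x B.

Definition policy_family (Theta : Type) (pi : Theta -> {set X} -> X -> R) : Prop :=
  forall th B, is_dist (pi th B).

Definition expressive (Theta : Type) (pi : Theta -> {set X} -> X -> R) : Prop :=
  forall p : {set X} -> X -> R, (forall B, is_dist (p B)) ->
    exists th, forall B x, pi th B x = p B x.

(* One step of greedy sampling from B with l i.i.d. candidates drawn from p:
   probability that the selected candidate equals y. *)
Definition argmax_idx (a : {set X} -> R) (l : nat) (B : {set X})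
    (t : {ffun 'I_l -> X}) : {set 'I_l} :=
  [set j | [forall k, gain a (t k) B <= gain a (t j) B]].

Definition select_prob (a : {set X} -> R) (l : nat) (B : {set X})
    (t : {ffun 'I_l -> X}) (y : X) : R :=
  #|[set j in argmax_idx a B t | t j == y]|%:R / #|argmax_idx a B t|%:R.

Definition step_prob (a : {set X} -> R) (p : X -> R) (l : nat) (B : {set X}) (y : X) : R :=
  \sum_(t : {ffun 'I_l -> X}) (\prod_(j < l) p (t j)) * select_prob a B t y.

Fixpoint GS_dist (a : {set X} -> R) (pol : {set X} -> X -> R) (k l : nat)
    (B' : {set X}) : R :=
  match k with
  | 0 => if B' == set0 then 1 else 0
  | k'.+1 => \sum_(B : {set X}) GS_dist a pol k' l B *
               \sum_(y : X | y |: B == B') step_prob a (pol B) l B y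
  end.

Definition J (a : {set X} -> R) (Theta : Type) (pi : Theta -> {set X} -> X -> R)
    (n : nat) (th th' : Theta) : R :=
  n%:R^-1 * \sum_(k < n) \sum_(B : {set X})
     GS_dist a (pi th') k 1 B * \sum_(x : X) pi th B x * gain a x B.

Definition prefix_set (n : nat) (xs : 'I_n -> X) (t : nat) : {set X} :=
  [set xs j | j : 'I_n & (j < t)%N].

Definition exact_greedy (a : {set X} -> R) (n : nat) (Bn : {set X}) : Prop :=
  exists xs : 'I_n -> X,
    Bn = [set xs j | j : 'I_n] /\
    forall t : 'I_n, forall x' : X,
      gain a x' (prefix_set xs t) <= gain a (xs t) (prefix_set xs t).

End GreedySampling.

(* Main.v *)
Require Import Defs.
From mathcomp Require Import all_boot all_order all_algebra.
From mathcomp Require Import lra.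
Import Order.TTheory GRing.Theory Num.Theory.
Local Open Scope ring_scope.

Section Helpers.
Variables (R : realFieldType) (X : finType).

Lemma sum_neq0_ex (I : finType) (P : pred I) (F : I -> R) :
  \sum_(i | P i) F i != 0 -> exists i, P i /\ F i != 0.
Proof.
case: (boolP [exists i, P i && (F i != 0)]).
  by move=> /existsP [i /andP [Pi Fi]]; exists i.
move=> /existsPn H; rewrite big1 ?eqxx // => i Pi.
by have := H i; rewrite Pi /= negbK => /eqP.
Qed.

Lemma sum_ge_term (I : finType) (P : pred I) (F : I -> R) i0 :
  (forall i, P i -> 0 <= F i) -> P i0 -> F i0 <= \sum_(i | P i) F i.
Proof.
move=> H Pi0; rewrite (bigD1 i0) //= lerDl; apply: sumr_ge0 => i /andP [Pi _].
exact: H.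
Qed.

Lemma exists_max (F : X -> R) (x : X) : exists m, forall z, F z <= F m.
Proof.
suff [m _ Hm] : exists2 m, m \in x :: enum X & forall z, z \in x :: enum X -> F z <= F m.
  by exists m => z; apply: Hm; rewrite inE mem_enum orbT.
elim: (enum X) x => [|y s IH] x.
  by exists x => [|z]; rewrite ?inE // => /eqP ->.
have [m Hm1 Hm2] := IH y.
case: (lerP (F x) (F m)) => h.
  exists m; first by rewrite inE Hm1 orbT.
  by move=> z; rewrite inE => /orP [/eqP ->|/Hm2].
exists x; first by rewrite inE eqxx.
move=> z; rewrite inE => /orP [/eqP -> //|/Hm2 ?]; lra.
Qed.

Variable a : {set X} -> R.

Lemma select_prob_ge0 l B (t : {ffun 'I_l -> X}) y : 0 <= select_prob a B t y.
Proof. by rewrite /select_prob divr_ge0 ?ler0n. Qed.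

Lemma step_prob_ge0 (p : X -> R) l B y : (forall x, 0 <= p x) ->
  0 <= step_prob a p l B y.
Proof.
move=> hp; apply: sumr_ge0 => t _; apply: mulr_ge0; last exact: select_prob_ge0.
by apply: prodr_ge0.
Qed.

Lemma step_prob_supp (p : X -> R) l B y : (forall x, 0 <= p x) ->
  step_prob a p l B y != 0 -> p y != 0.
Proof.
move=> hp; apply: contra => /eqP py0; apply/eqP; apply: big1 => t _.
case: (boolP [exists j, t j == y]).
  move=> /existsP [j /eqP tj]; rewrite (bigD1 j) //= tj py0.
  by rewrite !mul0r.
move=> /existsPn H; rewrite /select_prob.
have -> : [set j in argmax_idx a B t | t j == y] = set0.
  by apply/setP => j; rewrite !inE (negbTE (H j)) andbF.
by rewrite /select_prob cards0 mul0r mulr0.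
Qed.

Lemma step_prob1_ge (p : X -> R) B y : (forall x, 0 <= p x) ->
  p y <= step_prob a p 1 B y.
Proof.
move=> hp; set t0 : {ffun 'I_1 -> X} := [ffun _ => y].
rewrite /step_prob (bigD1 t0) //=.
have rest : 0 <= \sum_(t | t != t0) (\prod_(j < 1) p (t j)) * select_prob a B t y.
  apply: sumr_ge0 => t _; apply: mulr_ge0; last exact: select_prob_ge0.
  by apply: prodr_ge0.
suff -> : (\prod_(j < 1) p (t0 j)) * select_prob a B t0 y = p y by rewrite lerDl.
rewrite big_ord1 /t0 ffunE.
have E : [set j in argmax_idx a B t0 | t0 j == y] = argmax_idx a B t0.
  by apply/setP => j; rewrite !inE ffunE eqxx andbT.
rewrite /select_prob E mulfV ?mulr1 //.
rewrite pnatr_eq0 cards_eq0; apply/eqP => h.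
have : (ord0 : 'I_1) \in argmax_idx a B t0.
  by rewrite inE; apply/forallP => k; rewrite !ffunE.
by rewrite h inE.
Qed.

Lemma GS_ge0 pol k l B : (forall B x, 0 <= pol B x) ->
  0 <= GS_dist a pol k l B.
Proof.
move=> hp; elim: k B => [|k IH] B /=; first by case: (B == set0).
apply: sumr_ge0 => B0 _; apply: mulr_ge0 => //.
by apply: sumr_ge0 => y _; apply: step_prob_ge0.
Qed.

End Helpers.

Lemma greedy_support (R : realFieldType) (X : finType) (a : {set X} -> R)
    (n : nat) (Theta : Type) (pi : Theta -> {set X} -> X -> R) (ths : Theta) :
  (1 <= n)%N -> policy_family pi -> expressive pi ->
  (forall th : Theta, J a pi n th ths <= J a pi n ths ths) ->
  forall k B, (k < n)%N -> GS_dist a (pi ths) k 1 B != 0 ->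
  forall x, pi ths B x != 0 -> forall x', gain a x' B <= gain a x B.
Proof.
move=> n1 pf ex opt k B kn GS0 x px x'.
have pnn : forall B x, 0 <= pi ths B x by move=> B0 x0; exact: (pf ths B0).1.
rewrite leNgt; apply/negP => lt.
have [m Hm] := @exists_max _ _ (fun z => gain a z B) x.
pose p' := fun B' z => if B' == B then (if z == m then 1 else 0) else pi ths B' z.
have p'd : forall B', is_dist (p' B').
  move=> B'; rewrite /p'; case: eqP => _; last exact: pf.
  split; first by move=> z; case: eqP.
  by rewrite (bigD1 m) //= eqxx big1 ?addr0 // => z /negbTE ->.
have [th Hth] := ex p' p'd.
have := opt th; apply/negP; rewrite -ltNge.
rewrite /J ltr_pM2l ?invr_gt0 ?ltr0n //.
rewrite -subr_gt0 -sumrB.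
pose D B' := \sum_x pi th B' x * gain a x B' - \sum_x pi ths B' x * gain a x B'.
have DB : forall B', B' != B -> D B' = 0.
  move=> B' nB; rewrite /D; apply/eqP; rewrite subr_eq0; apply/eqP; apply: eq_bigr => z _.
  by rewrite Hth /p' (negbTE nB).
have DBpos : 0 < D B.
  rewrite /D (eq_bigr (fun z => (if z == m then 1 else 0) * gain a z B)); last first.
    by move=> z _; rewrite Hth /p' eqxx.
  rewrite (bigD1 m) //= eqxx mul1r big1 ?addr0; last by move=> z /negbTE ->; rewrite mul0r.
  have -> : gain a m B = \sum_z pi ths B z * gain a m B.
    by rewrite -mulr_suml (pf ths B).2 mul1r.
  rewrite -sumrB (bigD1 x) //=; apply: ltr_pwDl.
    rewrite -mulrBr mulr_gt0 //; first by rewrite lt0r px pnn.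
    by rewrite subr_gt0 (lt_le_trans lt (Hm x')).
  by apply: sumr_ge0 => z _; rewrite -mulrBr mulr_ge0 // subr_ge0 Hm.
have Dge0 : forall B', 0 <= D B'.
  by move=> B'; case: (eqVneq B' B) => [->|/DB ->]; [exact: ltW|].
have E : forall k' : nat,
  \sum_B' GS_dist a (pi ths) k' 1 B' * (\sum_x pi th B' x * gain a x B') -
  \sum_B' GS_dist a (pi ths) k' 1 B' * (\sum_x pi ths B' x * gain a x B') =
  \sum_B' GS_dist a (pi ths) k' 1 B' * D B'.
  by move=> k'; rewrite -sumrB; apply: eq_bigr => B' _; rewrite -mulrBr.
rewrite (eq_bigr (fun k' : 'I_n => \sum_B' GS_dist a (pi ths) k' 1 B' * D B') (fun k' _ => E k')) (bigD1 (Ordinal kn)) //=; apply: ltr_pwDl.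
  rewrite (bigD1 B) //= big1 ?addr0; last by move=> B' /DB ->; rewrite mulr0.
  by rewrite mulr_gt0 // lt0r GS0 GS_ge0.
apply: sumr_ge0 => k' _; apply: sumr_ge0 => B' _.
by rewrite mulr_ge0 // GS_ge0.
Qed.

Lemma reach_inv (R : realFieldType) (X : finType) (a : {set X} -> R)
    (n l : nat) (Theta : Type) (pi : Theta -> {set X} -> X -> R) (ths : Theta) :
  (1 <= n)%N -> policy_family pi -> expressive pi ->
  (forall th : Theta, J a pi n th ths <= J a pi n ths ths) ->
  forall k, (k <= n)%N -> forall B, GS_dist a (pi ths) k l B != 0 ->
  GS_dist a (pi ths) k 1 B != 0 /\
  exists s : seq X, size s = k /\ B = [set z in s] /\
    forall i d x', (i < k)%N ->
      gain a x' [set z in take i s] <= gain a (nth d s i) [set z in take i s].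
Proof.
move=> n1 pf ex opt.
have pnn : forall B x, 0 <= pi ths B x by move=> B0 x0; exact: (pf ths B0).1.
elim=> [|k IH] kn B /=.
  case: (eqVneq B set0) => [-> _|_]; last by rewrite /=; case: eqP => //; rewrite eqxx.
  split; first exact: oner_neq0.
  by exists [::]; split => //; split => //; apply/setP => z; rewrite !inE.
move=> /sum_neq0_ex [B0 [_]]; rewrite mulf_eq0 negb_or => /andP [G0 /sum_neq0_ex [y [/eqP yB st]]].
have py := @step_prob_supp _ _ a _ _ _ _ (pnn B0) st.
have [G1 [s [ss [Bs Hs]]]] := IH (ltnW kn) B0 G0.
have gy := @greedy_support _ _ a n _ pi ths n1 pf ex opt k B0 kn G1 y py.
split.
  suff : 0 < GS_dist a (pi ths) k.+1 1 (y |: B0) by rewrite -yB lt0r => /andP [].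
  rewrite /=; apply: lt_le_trans (@sum_ge_term _ _ _ _ B0 _ _); last first.
  - by [].
  - by move=> B1 _; rewrite mulr_ge0 ?GS_ge0 //; apply: sumr_ge0 => z _; exact: step_prob_ge0.
  apply: mulr_gt0; first by rewrite lt0r G1 GS_ge0.
  apply: lt_le_trans (@sum_ge_term _ _ _ _ y _ _); [| |by rewrite eqxx].
    by apply: lt_le_trans (@step_prob1_ge _ _ a _ _ _ (pnn B0)); rewrite lt0r py pnn.
  by move=> z _; exact: step_prob_ge0.
exists (rcons s y); split; first by rewrite size_rcons ss.
split.
  by rewrite -yB Bs; apply/setP => z; rewrite !inE mem_rcons in_cons.
move=> i d x'; rewrite ltnS leq_eqVlt => /orP [/eqP ->|ik].
  rewrite -cats1 take_size_cat // nth_cat ss ltnn subnn /= -Bs.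
  exact: gy.
rewrite -cats1 takel_cat ?ss ?(ltnW ik) // nth_cat ss ik.
exact: Hs.
Qed.
Theorem mainTheorem5 (R : realFieldType) (X : finType) (a : {set X} -> R)
    (n l : nat) (Theta : Type) (pi : Theta -> {set X} -> X -> R) (th_star : Theta) :
  monotone a ->
  (1 <= n)%N -> (1 <= l)%N ->
  policy_family pi ->
  expressive pi ->
  (forall th : Theta, J a pi n th th_star <= J a pi n th_star th_star) ->
  forall B : {set X}, ~ exact_greedy a n B -> GS_dist a (pi th_star) n l B = 0.
Proof.
move=> mon n1 l1 pf ex opt B nEG.
case: (eqVneq (GS_dist a (pi th_star) n l B) 0) => // H; exfalso.
have [_ [s [ss [Bs Hs]]]] :=
  @reach_inv _ _ a n l _ pi th_star n1 pf ex opt n (leqnn n) B H.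
apply: nEG.
case: s ss Bs Hs => [|d s'] ss Bs Hs; first by rewrite -ss in n1.
set s := d :: s' in ss Bs Hs *.
exists (fun j : 'I_n => nth d s j); split.
  rewrite Bs; apply/setP => z; rewrite inE; apply/idP/imsetP.
    move=> zs; have hz : (index z s < n)%N by rewrite -ss index_mem.
    by exists (Ordinal hz) => //=; rewrite nth_index.
  by move=> [j _ ->]; apply: mem_nth; rewrite ss.
have pre : forall t : 'I_n,
    prefix_set (fun j : 'I_n => nth d s j) t = [set z in take t s].
  move=> t; apply/setP => z; rewrite /prefix_set; apply/imsetP/idP; last first.
    rewrite inE => zt.
    have st : size (take t s) = t by rewrite size_takel // ss ltnW.
    have ht : (index z (take t s) < t)%N by rewrite -{2}st index_mem.
    exists (Ordinal (ltn_trans ht (ltn_ord t))); first by rewrite inE.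
    by rewrite /= -(nth_take d ht) nth_index.
  move=> [j]; rewrite inE => jt ->.
  by rewrite inE -(nth_take d jt) mem_nth // size_takel // ss ltnW.
by move=> t x'; rewrite pre; apply: Hs.
Qed.
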